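(* Let $q$ be odd, $q\ne9$, and $V$ an $n$-dimensional space ($n\ge4$) over $\mathbb{F}_q$ with a non-degenerate alternating form $f$, $G=\mathrm{Sp}(V)$ and $\mathcal T$ the set of transvections of $G$. Let $X\subseteq G$ be a generating set of $G$ consisting of $1$ and transvections, which is $\mathbb{F}_q$-closed, such that ${}_VX$ spans $V$, $X_{V^*}$ spans $V^*$, $\Gamma(X)$ is strongly connected, and the directed diameter of $\Gamma(X'')$ is at most $2$ for every $X\setminus\{1\}\subseteq X''\subseteq\mathcal T$. Let $c\ge1$ be an absolute constant such that for every such $V,X$ and all nonzero $a,b\in V$ with $T_a\cup T_b\subseteq X$ and $a+b\ne0$ one has $\ell_X(T_{a+b})\le c$ (such a constant exists). Then $\ell_X(\mathcal T)\le c\,n^{\log_2 c}$. Moreover, $\ell_X(\mathcal T)\le 21n^{4.4}$.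
   Context: Transvections $s=1+u\otimes\phi$ ($x\mapsto x+\phi(x)u$, $\phi(u)=0$); $s^\lambda=1+\lambda u\otimes\phi$; $X$ is $\mathbb{F}_q$-closed if $s^\lambda\in X$ for all $s\in X$, $\lambda\in\mathbb{F}_q^\times$. ${}_VX$, $X_{V^*}$: the sets of $u$, resp. $\phi$, occurring in elements of $X$. $\Gamma(Y)$: directed graph on $Y$ with an edge from $1+u\otimes\phi$ to $1+v\otimes\psi$ iff $\psi(u)\ne0$. For $0\ne v\in V$, $\varphi_v(x)=f(v,x)$ and $T_v=\{1+\lambda v\otimes\varphi_v:\lambda\in\mathbb{F}_q\}$. $\ell_X(Y)=\min\{k:Y\subseteq(X\cup X^{-1}\cup\{1\})^k\}$. *)

(* Defs.v *)
From Stdlib Require Import Reals.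
From HB Require Import structures.
From mathcomp Require Import all_boot all_order all_algebra all_fingroup all_field.
Set Implicit Arguments. Unset Strict Implicit. Unset Printing Implicit Defensive.
Import GRing.Theory.
Local Open Scope ring_scope.

Section Symp.
Variables (F : finFieldType) (n : nat).

(* V = 'rV[F]_n (row vectors); linear maps act on the right: x |-> x *m g.
   The bilinear form is f(x,y) = x J y^T for a matrix J. *)
Definition formv (J : 'M[F]_n) (x y : 'rV[F]_n) : F := (x *m J *m y^T) 0 0.

Definition alt_nondeg (J : 'M[F]_n) : Prop :=
  (forall x : 'rV[F]_n, formv J x x = 0) /\ J \in unitmx.

Definition Sp (J : 'M[F]_n) : {set 'M[F]_n} :=
  [set g : 'M[F]_n | (g \in unitmx) && (g *m J *m g^T == J)].

(* s = 1 + u (x) phi : x |-> x + phi(x) u, with u <> 0, phi <> 0, phi(u) = 0.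
   A linear functional phi in V^* is represented by a column vector:
   phi(x) = (x *m phi) 0 0. *)
Definition transv_rep (s : 'M[F]_n) (u : 'rV[F]_n) (phi : 'cV[F]_n) : bool :=
  [&& u != 0, phi != 0, u *m phi == 0 & s == 1%:M + phi *m u].

Definition is_transv (s : 'M[F]_n) : bool :=
  [exists u, exists phi, transv_rep s u phi].

Definition transvs (J : 'M[F]_n) : {set 'M[F]_n} :=
  [set s in Sp J | is_transv s].

Definition Fq_closed (X : {set 'M[F]_n}) : Prop :=
  forall s, s \in X -> forall lam : F, lam != 0 -> 1%:M + lam *: (s - 1%:M) \in X.

Definition VX (X : {set 'M[F]_n}) : {set 'rV[F]_n} :=
  [set u | [exists s in X, exists phi, transv_rep s u phi]].
Definition XVs (X : {set 'M[F]_n}) : {set 'cV[F]_n} :=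
  [set phi | [exists s in X, exists u, transv_rep s u phi]].

Definition spans_rV (A : {set 'rV[F]_n}) : Prop :=
  forall v : 'rV[F]_n, exists c : 'rV[F]_n -> F, v = \sum_(u in A) c u *: u.
Definition spans_cV (A : {set 'cV[F]_n}) : Prop :=
  forall v : 'cV[F]_n, exists c : 'cV[F]_n -> F, v = \sum_(u in A) c u *: u.

Definition gedge (s t : 'M[F]_n) : bool :=
  [exists u, exists phi, exists v, exists psi,
     [&& transv_rep s u phi, transv_rep t v psi & u *m psi != 0]].

Definition Gamma (Y : {set 'M[F]_n}) : rel 'M[F]_n :=
  [rel s t | [&& s \in Y, t \in Y & gedge s t]].

Definition strongly_connected (Y : {set 'M[F]_n}) : Prop :=
  forall s t, s \in Y -> t \in Y -> connect (Gamma Y) s t.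

Definition diam_le2 (Y : {set 'M[F]_n}) : Prop :=
  forall s t, s \in Y -> t \in Y ->
    [|| s == t, gedge s t | [exists w in Y, gedge s w && gedge w t]].

Fixpoint setpow (S : {set 'M[F]_n}) (k : nat) : {set 'M[F]_n} :=
  match k with
  | 0 => [set 1%:M]
  | k'.+1 => [set a *m b | a in setpow S k', b in S]
  end.

Definition symm1 (X : {set 'M[F]_n}) : {set 'M[F]_n} :=
  X :|: [set invmx x | x in X] :|: [set 1%:M].

(* X generates G (G finite, so the generated group is the union of the
   powers of X cup X^{-1} cup {1}) *)
Definition generates (J : 'M[F]_n) (X : {set 'M[F]_n}) : Prop :=
  X \subset Sp J /\ forall g, g \in Sp J -> exists k, g \in setpow (symm1 X) k.

Definition ell_le (X Y : {set 'M[F]_n}) (r : R) : Prop :=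
  exists k : nat, Rle (INR k) r /\ Y \subset setpow (symm1 X) k.

(* T_v = {1 + lambda v (x) phi_v}, phi_v(x) = f(v,x) = x J^T v^T *)
Definition Tv (J : 'M[F]_n) (v : 'rV[F]_n) : {set 'M[F]_n} :=
  [set 1%:M + lam *: ((J^T *m v^T) *m v) | lam : F].

Definition good_setup (J : 'M[F]_n) (X : {set 'M[F]_n}) : Prop :=
  [/\ odd #|F|, #|F| <> 9%N, (4 <= n)%N & alt_nondeg J] /\
  [/\ generates J X, 1%:M \in X, X :\ 1%:M \subset transvs J & Fq_closed X] /\
  [/\ spans_rV (VX X), spans_cV (XVs X), strongly_connected (X :\ 1%:M) &
      forall X'' : {set 'M[F]_n}, X :\ 1%:M \subset X'' -> X'' \subset transvs J ->
        diam_le2 X''].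

End Symp.

(* Main.v *)
Require Import Defs.
From Stdlib Require Import Reals.
From Stdlib Require Import Lra Lia ZArith.

Section Reals_part.
Local Open Scope R_scope.

Lemma ln2_pos : 0 < ln 2.
Proof. rewrite <- ln_1; apply ln_increasing; lra. Qed.

Lemma exp_mono x y : x <= y -> exp x <= exp y.
Proof.
intros h; destruct (Rle_lt_or_eq_dec _ _ h) as [h'|h'].
- left; apply exp_increasing; exact h'.
- rewrite h'; lra.
Qed.

Lemma ln_le x y : 0 < x -> x <= y -> ln x <= ln y.
Proof.
intros hx h; destruct (Rle_lt_or_eq_dec _ _ h) as [h'|h'].
- left; apply ln_increasing; assumption.
- rewrite h'; lra.
Qed.

Lemma real_bound (K j n : nat) (c : R) : INR K <= c -> 1 <= c -> le 1 j ->
  le (Nat.pow 2 (Nat.sub j 1)) n ->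
  INR (Nat.pow K j) <= c * Rpower (INR n) (ln c / ln 2).
Proof.
intros hK hc hj hn.
assert (h2 : INR (2 ^ (Nat.sub j 1)) = 2 ^ (Nat.sub j 1)).
{ rewrite pow_INR. reflexivity. }
assert (hp : 0 < 2 ^ (Nat.sub j 1)) by (apply pow_lt; lra).
assert (hn1 : 2 ^ (Nat.sub j 1) <= INR n).
{ rewrite <- h2; apply le_INR; exact hn. }
rewrite pow_INR.
apply (Rle_trans _ (c ^ j)).
{ apply pow_incr; split; [apply pos_INR| exact hK]. }
replace j with (S (Nat.sub j 1)) at 1 by lia.
simpl pow. apply Rmult_le_compat_l; [lra|].
rewrite <- (Rpower_pow (Nat.sub j 1) c) by lra.
unfold Rpower. apply exp_mono.
assert (hl2 := ln2_pos).
assert (hlc : 0 <= ln c).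
{ rewrite <- ln_1. apply ln_le; lra. }
assert (hle : INR (Nat.sub j 1) * ln 2 <= ln (INR n)).
{ rewrite <- ln_pow by lra. apply ln_le; lra. }
assert (hle2 : INR (Nat.sub j 1) <= ln (INR n) / ln 2).
{ apply (Rmult_le_reg_r (ln 2)); [lra|]. unfold Rdiv. rewrite Rmult_assoc, Rinv_l by lra. lra. }
replace (ln c / ln 2 * ln (INR n)) with (ln (INR n) / ln 2 * ln c) by (unfold Rdiv; ring).
apply Rmult_le_compat_r; lra.
Qed.

Lemma num_bound (n : nat) : le 1 n ->
  INR 19 * Rpower (INR n) (ln (INR 19) / ln (INR 2)) <=
  INR 21 * Rpower (INR n) (INR 44 / INR 10).
Proof.
intros hn.
assert (hn1 : 1 <= INR n) by (replace 1 with (INR 1) by reflexivity; apply le_INR; exact hn).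
assert (e19 : INR 19 = IZR 19) by (rewrite INR_IZR_INZ; reflexivity).
assert (e2 : INR 2 = IZR 2) by (rewrite INR_IZR_INZ; reflexivity).
assert (e21 : INR 21 = IZR 21) by (rewrite INR_IZR_INZ; reflexivity).
assert (e44 : INR 44 = IZR 44) by (rewrite INR_IZR_INZ; reflexivity).
assert (e10 : INR 10 = IZR 10) by (rewrite INR_IZR_INZ; reflexivity).
rewrite e19, e2, e21, e44, e10.
assert (hl2 := ln2_pos).
assert (hexp : ln (IZR 19) / ln 2 <= IZR 44 / IZR 10).
{ assert (hk : IZR 10 * ln (IZR 19) <= IZR 44 * ln 2).
  { replace (IZR 10) with (INR 10) by (rewrite INR_IZR_INZ; reflexivity).
    replace (IZR 44) with (INR 44) by (rewrite INR_IZR_INZ; reflexivity).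
    rewrite <- !ln_pow by lra.
    apply ln_le; [apply pow_lt; lra|].
    rewrite !pow_IZR. apply IZR_le. vm_compute. discriminate. }
  apply (Rmult_le_reg_r (ln 2)); [lra|].
  unfold Rdiv. rewrite Rmult_assoc, Rinv_l by lra.
  apply (Rmult_le_reg_l (IZR 10)); [lra|].
  replace (IZR 10 * (IZR 44 * / IZR 10 * ln 2)) with (IZR 44 * ln 2) by (field; lra).
  lra. }
apply Rmult_le_compat.
- lra.
- unfold Rpower; left; apply exp_pos.
- lra.
- apply Rle_Rpower; lra.
Qed.

Lemma K_of_c (c : R) : 1 <= c -> exists K : nat,
  le 1 K /\ INR K <= c /\ forall k, INR k <= c -> le k K.
Proof.
intros hc. destruct (archimed c) as [h1 h2].
assert (hz : (1 < up c)%Z) by (apply lt_IZR; lra).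
exists (Z.to_nat (up c - 1)).
assert (e : INR (Z.to_nat (up c - 1)) = IZR (up c) - 1).
{ rewrite INR_IZR_INZ, Z2Nat.id by lia. rewrite minus_IZR. reflexivity. }
split; [lia|split].
- rewrite e; lra.
- intros k hk. assert (hk' : (Z.of_nat k < up c)%Z).
  { apply lt_IZR. rewrite <- INR_IZR_INZ. lra. }
  lia.
Qed.

End Reals_part.

From mathcomp Require Import all_boot all_order all_algebra all_fingroup all_field.
From mathcomp Require Import ring.
Set Implicit Arguments. Unset Strict Implicit. Unset Printing Implicit Defensive.
Import GRing.Theory.
Local Open Scope ring_scope.

Lemma addE11 (F : finFieldType) (A B : 'M[F]_1) : (A + B) 0 0 = A 0 0 + B 0 0.
Proof. by rewrite mxE. Qed.

Lemma delta_form (F : finFieldType) n (A : 'M[F]_n) (i j : 'I_n) :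
  ((delta_mx (0 : 'I_1) i : 'rV[F]_n) *m A *m (delta_mx (0 : 'I_1) j : 'rV[F]_n)^T) 0 0 = A i j.
Proof. by rewrite -rowE trmx_delta -colE !mxE. Qed.

Lemma alt_anti (F : finFieldType) n (J : 'M[F]_n) :
  (forall x, formv J x x = 0) -> J^T = - J.
Proof.
move=> halt.
have key : forall x y, formv J x y + formv J y x = 0.
  move=> x y; have := halt (x + y).
  rewrite /formv linearD /= !mulmxDl !mulmxDr !addE11.
  have := halt x; have := halt y; rewrite /formv => -> ->.
  by rewrite add0r addr0.
apply/matrixP => i j; rewrite !mxE.
have := key (delta_mx (0 : 'I_1) j) (delta_mx (0 : 'I_1) i); rewrite /formv !delta_form.
by move/eqP; rewrite addr_eq0 => /eqP.
Qed.

Lemma two_nz (F : finFieldType) : odd #|F| -> (2%:R : F) != 0.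
Proof.
move=> hodd; apply/negP => h2.
have pc : (2%N \in [pchar F]) by apply/andP; split.
have hc := card_pprimeChar pc.
have g1 := card_finNzRing_gt1 F.
have e : #|F| = #|pPrimeCharType pc| by [].
rewrite e hc in hodd g1.
move: hodd g1; case: (logn _ _) => [|k] //.
by rewrite expnS oddM.
Qed.

Section Vec.
Variables (K : fieldType) (vT : vectType K).
Implicit Types (L Y s : seq vT).

Lemma ex_free_sub L : exists Y, [/\ free Y, {subset Y <= L} & (<<L>> <= <<Y>>)%VS].
Proof.
elim: L => [|x L [Y [fY sY hY]]].
  by exists [::]; split => //; rewrite nil_free.
have [hx|hx] := boolP (x \in <<Y>>)%VS.
  exists Y; split => //; first by move=> y /sY; rewrite inE orbC => ->.
  by rewrite span_cons subv_add -memvE hx.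
exists (x :: Y); split.
- by rewrite free_cons hx.
- by move=> y; rewrite !inE => /orP[->|/sY ->]; rewrite ?orbT.
- by rewrite !span_cons addvS.
Qed.

Lemma sum_free_neq0 s : free s -> s != [::] -> \sum_(w <- s) w != 0.
Proof.
case: s => [//|v s]; rewrite free_cons big_cons => /andP[hv _] _.
apply: contra hv; rewrite addr_eq0 => /eqP ->; rewrite memvN.
by rewrite big_seq; apply: memv_suml => w hw; apply: memv_span.
Qed.

Lemma free_scale_filter (k : vT -> K) Y : free Y ->
  free [seq k x *: x | x <- Y & k x != 0].
Proof.
elim: Y => [|x Y IH]; first by rewrite nil_free.
rewrite free_cons => /andP[hx fY] /=.
case: ifP => hk; last exact: IH.
rewrite /= free_cons IH // andbT; apply: contra hx => h.
have sub : (<<[seq k x *: x | x <- Y & k x != 0%R]>> <= <<Y>>)%VS.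
  apply/span_subvP => w /mapP[y]; rewrite mem_filter => /andP[_ hy] ->.
  by apply: memvZ; apply: memv_span.
have := memvZ (k x)^-1 (subvP sub _ h).
by rewrite scalerA mulVf ?scale1r // (negbT hk) ?hk.
Qed.

End Vec.

Section Pow.
Variables (F : finFieldType) (n : nat).
Implicit Types (S X : {set 'M[F]_n}) (x y z : 'M[F]_n).

Lemma setpowS S k x y : x \in setpow S k -> y \in S -> x *m y \in setpow S k.+1.
Proof. by move=> hx hy; apply/imset2P; exists x y. Qed.

Lemma setpowSP S k z : z \in setpow S k.+1 -> exists x y, [/\ x \in setpow S k, y \in S & z = x *m y].
Proof. by case/imset2P => x y hx hy ->; exists x, y. Qed.

Lemma setpow0P S z : z \in setpow S 0 -> z = 1%:M.
Proof. by rewrite /= inE => /eqP. Qed.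

Lemma setpow0 S : 1%:M \in setpow S 0.
Proof. by rewrite /= inE. Qed.

Lemma setpow1 S x : x \in S -> x \in setpow S 1.
Proof. by move=> hx; rewrite -[x]mul1mx; apply: setpowS => //; exact: setpow0. Qed.

Lemma setpow_mul S m k x y : x \in setpow S m -> y \in setpow S k -> x *m y \in setpow S (m + k).
Proof.
elim: k y => [|k IH] y hx.
  by move/setpow0P => ->; rewrite mulmx1 addn0.
case/setpowSP => [y1 [y2 [h1 h2 ->]]].
by rewrite addnS mulmxA; apply: setpowS => //; exact: IH.
Qed.

Lemma setpow_mono S (m k : nat) x : 1%:M \in S -> (m <= k)%N -> x \in setpow S m -> x \in setpow S k.
Proof.
move=> h1 /subnK <- hx; rewrite addnC -[x]mulmx1; apply: setpow_mul => //.
elim: (k - m)%N => [|r IH]; first exact: setpow0.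
by rewrite -[1%:M]mulmx1; apply: setpowS.
Qed.

Lemma setpow_sub S1 S2 r k x : (forall y, y \in S1 -> y \in setpow S2 r) ->
  x \in setpow S1 k -> x \in setpow S2 (k * r).
Proof.
move=> hS; elim: k x => [|k IH] x.
  by move/setpow0P => ->; exact: setpow0.
case/setpowSP => [y1 [y2 [h1 h2 ->]]].
by rewrite mulSn addnC; apply: setpow_mul; [exact: IH | exact: hS].
Qed.

Lemma symm1_1 X : 1%:M \in symm1 X.
Proof. by rewrite /symm1 !inE eqxx orbT. Qed.

Lemma symm1_X X x : x \in X -> x \in symm1 X.
Proof. by move=> hx; rewrite /symm1 !inE hx. Qed.

Lemma symm1_inv X x : x \in X -> invmx x \in symm1 X.
Proof. by move=> hx; rewrite /symm1 !inE; apply/orP; left; apply/orP; right; apply/imsetP; exists x. Qed.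

End Pow.

Lemma span_sup (F : finFieldType) m k (A B : {set 'M[F]_(m,k)}) :
  (forall v : 'M[F]_(m,k), exists c : 'M[F]_(m,k) -> F, v = \sum_(u in A) c u *: u) ->
  A \subset B ->
  (forall v : 'M[F]_(m,k), exists c : 'M[F]_(m,k) -> F, v = \sum_(u in B) c u *: u).
Proof.
move=> hA hAB v; have [c ->] := hA v.
exists (fun u => if u \in A then c u else 0).
rewrite [in RHS](big_setID A) /= (setIidPr hAB) [X in _ = _ + X]big1 ?addr0.
  by apply: eq_bigr => u ->.
by move=> u; rewrite !inE => /andP[/negbTE -> _]; rewrite scale0r.
Qed.

Lemma diam_sc (F : finFieldType) n (Y : {set 'M[F]_n}) : diam_le2 Y -> strongly_connected Y.
Proof.
move=> hd s t hs ht; have /or3P[/eqP ->|he|/existsP[w /andP[hw /andP[h1 h2]]]] := hd s t hs ht.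
- exact: connect0.
- by apply: connect1; apply/and3P; split.
- by apply: (@connect_trans _ _ w); apply: connect1; apply/and3P; split.
Qed.

Lemma setpow_monoS (F : finFieldType) n (S1 S2 : {set 'M[F]_n}) k x :
  S1 \subset S2 -> x \in setpow S1 k -> x \in setpow S2 k.
Proof.
move=> h hx; rewrite -[k]muln1; apply: setpow_sub hx => y hy.
by apply: setpow1; apply: (subsetP h).
Qed.

Lemma symm1_mono (F : finFieldType) n (X Y : {set 'M[F]_n}) : X \subset Y -> symm1 X \subset symm1 Y.
Proof.
move=> h; apply/subsetP => x; rewrite /symm1 !inE => /orP[/orP[hx|/imsetP[y hy ->]]|->].
- by rewrite (subsetP h x hx).
- by apply/orP; left; apply/orP; right; apply/imsetP; exists y => //; apply: (subsetP h).
- by rewrite orbT.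
Qed.

Section Alg.
Variables (F : finFieldType) (n : nat) (J : 'M[F]_n).

Definition bet (x y : 'rV[F]_n) : F := (x *m J^T *m y^T) 0 0.
Definition Nv (v : 'rV[F]_n) : 'M[F]_n := J^T *m v^T *m v.
Definition tv (v : 'rV[F]_n) (l : F) : 'M[F]_n := 1%:M + l *: Nv v.

Lemma m11 (A : 'M[F]_1) : A = (A 0 0)%:M.
Proof. exact: mx11_scalar. Qed.

Lemma betE x y : x *m J^T *m y^T = (bet x y)%:M.
Proof. exact: mx11_scalar. Qed.

Lemma betDl x y z : bet (x + y) z = bet x z + bet y z.
Proof. by rewrite /bet !mulmxDl mxE. Qed.
Lemma betDr x y z : bet x (y + z) = bet x y + bet x z.
Proof. by rewrite /bet linearD /= mulmxDr mxE. Qed.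
Lemma betZl c x z : bet (c *: x) z = c * bet x z.
Proof. by rewrite /bet -!scalemxAl mxE. Qed.
Lemma betZr c x z : bet x (c *: z) = c * bet x z.
Proof. by rewrite /bet linearZ /= -scalemxAr mxE. Qed.
Lemma betNl x z : bet (- x) z = - bet x z.
Proof. by rewrite -scaleN1r betZl mulN1r. Qed.
Lemma betNr x z : bet x (- z) = - bet x z.
Proof. by rewrite -scaleN1r betZr mulN1r. Qed.

Lemma tv_act x v l : x *m tv v l = x + (l * bet x v) *: v.
Proof.
rewrite /tv mulmxDr mulmx1 -scalemxAr /Nv !mulmxA betE mul_scalar_mx scalerA.
by rewrite mulrC.
Qed.

Lemma tv0 v : tv v 0 = 1%:M.
Proof. by rewrite /tv scale0r addr0. Qed.

Hypothesis hanti : J^T = - J.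

Lemma bet_anti x y : bet x y = - bet y x.
Proof.
have tr : forall A : 'M[F]_1, A 0 0 = A^T 0 0 by move=> A; rewrite mxE.
have oppE : forall A : 'M[F]_1, (- A) 0 0 = - A 0 0 by move=> A; rewrite mxE.
rewrite /bet tr !trmx_mul !trmxK hanti mulmxN mulNmx oppE !mulmxA.
by rewrite opprK.
Qed.

Hypothesis halt : forall x, formv J x x = 0.

Lemma bet_alt x : bet x x = 0.
Proof.
have oppE : forall A : 'M[F]_1, (- A) 0 0 = - A 0 0 by move=> A; rewrite mxE.
by rewrite /bet hanti mulmxN mulNmx oppE -/(formv J x x) halt oppr0.
Qed.

Lemma Jneg : J = - J^T.
Proof. by rewrite hanti opprK. Qed.

Lemma vp (v : 'rV[F]_n) : v *m (J^T *m v^T) = 0.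
Proof.
rewrite mulmxA betE bet_alt; apply/matrixP => i j; rewrite !mxE.
by rewrite mul0rn.
Qed.

Lemma vJ (v : 'rV[F]_n) : v *m J^T = - (J^T *m v^T)^T.
Proof. by rewrite trmx_mul !trmxK hanti mulmxN. Qed.

Lemma NvE v : Nv v = (J^T *m v^T) *m v.
Proof. by []. Qed.

Lemma NvNv v : Nv v *m Nv v = 0.
Proof.
have -> : Nv v *m Nv v = J^T *m v^T *m (v *m (J^T *m v^T)) *m v by rewrite /Nv !mulmxA.
by rewrite vp mulmx0 mul0mx.
Qed.

Lemma tv_mul v a b : tv v a *m tv v b = tv v (a + b).
Proof.
rewrite /tv !mulmxDl !mulmxDr !mul1mx !mulmx1 -!scalemxAl -!scalemxAr NvNv.
by rewrite !scaler0 addr0 scalerDl -addrA (addrC (b *: _)).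
Qed.

Lemma tv_inv v a : tv v (- a) *m tv v a = 1%:M.
Proof. by rewrite tv_mul addNr tv0. Qed.

Lemma tv_inv' v a : tv v a *m tv v (- a) = 1%:M.
Proof. by rewrite tv_mul addrN tv0. Qed.

Lemma tv_pres v l : tv v l *m J^T *m (tv v l)^T = J^T.
Proof.
set p := J^T *m v^T.
have hN : Nv v = p *m v by [].
have hNt : (Nv v)^T = v^T *m p^T by rewrite hN trmx_mul.
have hv : v *m J^T = - p^T by rewrite vJ.
have hvp : v *m p = 0 by rewrite vp.
have hpt : p^T *m v^T = 0 by rewrite -trmx_mul hvp trmx0.
rewrite /tv linearD /= linearZ /= trmx1 hNt hN.
rewrite !mulmxDl !mulmxDr !mul1mx !mulmx1 -!scalemxAl -!scalemxAr.
have h3 : p *m v *m J^T = - (p *m p^T) by rewrite -mulmxA hv mulmxN.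
have h4 : p *m p^T *m (v^T *m p^T) = 0.
  by rewrite mulmxA -(mulmxA p) hpt mulmx0 mul0mx.
rewrite mulmxA -/p h3 mulNmx h4 oppr0 !scaler0 addr0 scalerN.
by rewrite addrK.
Qed.




Lemma sAr (a : F) m k p (A : 'M[F]_(m,k)) (B : 'M[F]_(k,p)) :
  A *m (a *: B) = a *: (A *m B).
Proof.
apply/matrixP=> i j; rewrite !mxE big_distrr /=.
by apply: eq_bigr => r _; rewrite !mxE mulrCA.
Qed.

Definition presT (g : 'M[F]_n) := g *m J^T *m g^T = J^T.

Lemma presT_mul g1 g2 : presT g1 -> presT g2 -> presT (g1 *m g2).
Proof.
rewrite /presT => h1 h2; rewrite trmx_mul.
have -> : g1 *m g2 *m J^T *m (g2^T *m g1^T) = g1 *m (g2 *m J^T *m g2^T) *m g1^T.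
  by rewrite !mulmxA.
by rewrite h2 h1.
Qed.

Lemma presT_tv v l : presT (tv v l).
Proof. exact: tv_pres. Qed.

Lemma tv_conj g h v l : presT g -> h *m g = 1%:M ->
  h *m tv v l *m g = tv (v *m g) l.
Proof.
rewrite /presT => hp hg.
have e : h *m J^T = J^T *m g^T.
  by rewrite -{1}hp !mulmxA hg mul1mx.
rewrite /tv mulmxDr mulmxDl mulmx1 hg; congr (_ + _).
rewrite sAr -scalemxAl /Nv; congr (_ *: _).
by rewrite !mulmxA e trmx_mul !mulmxA.
Qed.

Lemma tv_Sp v l : tv v l \in Sp J.
Proof.
rewrite inE; apply/andP; split.
  by case: (mulmx1_unit (tv_inv' v l)).
have h := tv_pres v l.
rewrite hanti mulmxN mulNmx in h.
by apply/eqP; apply: oppr_inj.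
Qed.

Lemma sAl (a : F) m k p (A : 'M[F]_(m,k)) (B : 'M[F]_(k,p)) :
  (a *: A) *m B = a *: (A *m B).
Proof.
apply/matrixP=> i j; rewrite !mxE big_distrr /=.
by apply: eq_bigr => r _; rewrite !mxE mulrA.
Qed.

Lemma trZ (c : F) m k (A : 'M[F]_(m,k)) : (c *: A)^T = c *: A^T.
Proof. by apply/matrixP=> i j; rewrite !mxE. Qed.

Lemma Nv_scale c (v : 'rV[F]_n) : Nv (c *: v) = (c * c) *: Nv v.
Proof. by rewrite /Nv trZ !sAr sAl scalerA. Qed.

Lemma tv_scale c (v : 'rV[F]_n) l : tv (c *: v) l = tv v (l * (c * c)).
Proof. by rewrite /tv Nv_scale scalerA. Qed.

Lemma Tv_scale c (v : 'rV[F]_n) : c != 0 -> Tv J (c *: v) = Tv J v.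
Proof.
move=> hc; apply/setP => t; apply/imsetP/imsetP => [[l _ ->]|[l _ ->]].
  by exists (l * (c * c)) => //; exact: tv_scale.
exists (l / (c * c)) => //.
have := tv_scale c v (l / (c * c)); by rewrite mulfVK ?mulf_neq0.
Qed.

Lemma Tv_tv v l : tv v l \in Tv J v.
Proof. by apply/imsetP; exists l. Qed.

Lemma TvP v t : t \in Tv J v -> exists l, t = tv v l.
Proof. by case/imsetP => l _ ->; exists l. Qed.


Lemma nz_entry m k (A : 'M[F]_(m,k)) : A != 0 -> exists i j, A i j != 0.
Proof.
move=> h.
have : ~~ [forall i, forall j, A i j == 0].
  apply: contra h => /forallP H; apply/eqP/matrixP => i j; rewrite mxE.
  exact/eqP/(forallP (H i) j).
rewrite negb_forall => /existsP[i]; rewrite negb_forall => /existsP[j hj].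
by exists i, j.
Qed.

Lemma mulcr_entry (p : 'cV[F]_n) (u : 'rV[F]_n) i j : (p *m u) i j = p i 0 * u 0 j.
Proof. by rewrite mxE big_ord1. Qed.

Lemma colrow_neq0 (p : 'cV[F]_n) (u : 'rV[F]_n) : p != 0 -> u != 0 -> p *m u != 0.
Proof.
move=> /nz_entry[i [x hi]] /nz_entry[y [j hj]].
rewrite (ord1 x) in hi; rewrite (ord1 y) in hj.
apply/eqP => /matrixP /(_ i j); rewrite mulcr_entry mxE => /eqP.
by rewrite mulf_eq0 (negbTE hi) (negbTE hj).
Qed.

Lemma rank1_row (phi p : 'cV[F]_n) (u a : 'rV[F]_n) :
  phi != 0 -> phi *m u = p *m a -> exists k, u = k *: a.
Proof.
move=> /nz_entry[i [x hi]] e; rewrite (ord1 x) in hi.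
exists (p i 0 / phi i 0); apply/matrixP => y j; rewrite (ord1 y) mxE.
move/matrixP: e => /(_ i j); rewrite !mulcr_entry => e.
by apply: (mulfI hi); rewrite e; field.
Qed.

Lemma rank1_col (phi p : 'cV[F]_n) (u a : 'rV[F]_n) :
  u != 0 -> phi *m u = p *m a -> exists k, phi = k *: p.
Proof.
move=> /nz_entry[x [j hj]] e; rewrite (ord1 x) in hj.
exists (a 0 j / u 0 j); apply/matrixP => i y; rewrite (ord1 y) mxE.
move/matrixP: e => /(_ i j); rewrite !mulcr_entry => e.
by apply: (mulIf hj); rewrite e; field.
Qed.

Hypothesis hJu : J \in unitmx.

Lemma p_neq0 (v : 'rV[F]_n) : v != 0 -> J^T *m v^T != 0.
Proof.
move=> hv; apply: contra hv => /eqP h.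
have h2 : v *m J = 0 by rewrite -[v *m J]trmxK trmx_mul h trmx0.
by rewrite -(mulmxK hJu v) h2 mul0mx.
Qed.

Lemma Nv_neq0 v : v != 0 -> Nv v != 0.
Proof. by move=> hv; apply: colrow_neq0 => //; exact: p_neq0. Qed.

Lemma tv_neq1 v l : v != 0 -> l != 0 -> tv v l != 1%:M.
Proof.
move=> hv hl; apply/eqP => /(congr1 (fun M => M - 1%:M)).
rewrite /tv addrC addKr subrr => /eqP; rewrite scalemx_eq0 (negbTE hl) /=.
by apply/negP; exact: Nv_neq0.
Qed.


Lemma Sp_form (s : 'M[F]_n) u phi : s \in Sp J -> transv_rep s u phi ->
  exists mu, mu != 0 /\ s = tv u mu.
Proof.
rewrite inE => /andP[_ /eqP hs] /and4P[hu hphi /eqP hup /eqP es].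
set p := J^T *m u^T.
have hpT : p^T = u *m J by rewrite /p trmx_mul !trmxK.
have hJu' : J *m u^T = - p by rewrite /p hanti mulNmx opprK.
have huJu : u *m J *m u^T = 0.
  rewrite [u *m J *m u^T]mx11_scalar -/(formv J u u) halt; apply/matrixP => i j; rewrite !mxE.
  by rewrite mul0rn.
rewrite es linearD /= trmx1 trmx_mul in hs.
rewrite !mulmxDl !mulmxDr !mul1mx !mulmx1 in hs.
have e1 : phi *m u *m J *m (u^T *m phi^T) = 0.
  by rewrite !mulmxA -(mulmxA phi u) -(mulmxA phi (u *m J)) huJu mulmx0 mul0mx.
rewrite e1 addr0 -(mulmxA phi) -hpT (mulmxA J) hJu' mulNmx in hs.
have e2 : phi *m p^T = p *m phi^T.
  move/(congr1 (fun M => M - J)): hs; rewrite addrAC (addrAC J) subrr add0r => /eqP.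
  by rewrite addrC subr_eq0 => /eqP.
have hpt0 : p^T != 0 by rewrite -trmx0 (inj_eq trmx_inj) p_neq0.
have [k hk] := rank1_col hpt0 e2.
exists k; split.
  by apply: contra hphi => /eqP k0; rewrite hk k0 scale0r.
by rewrite es hk /tv sAl.
Qed.


Lemma rep_tv v l u phi : transv_rep (tv v l) u phi ->
  [/\ u != 0, phi != 0, u *m phi = 0 & phi *m u = (l *: (J^T *m v^T)) *m v].
Proof.
move=> /and4P[hu hphi /eqP hup /eqP es]; split => //.
by move: es; rewrite /tv sAl => /addrI.
Qed.

Lemma gedge_tv a b la lb : gedge (tv a la) (tv b lb) -> bet a b != 0.
Proof.
move=> /existsP[u /existsP[phi /existsP[v /existsP[psi /and3P[r1 r2 h]]]]].
have [_ hphi _ e1] := rep_tv r1.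
have [hv _ _ e2] := rep_tv r2.
have [k hk] := rank1_row hphi e1.
have [k' hk'] := rank1_col hv e2.
apply: contra h => /eqP h0.
rewrite hk hk' sAl sAr sAr mulmxA betE h0.
apply/eqP/matrixP => i j; rewrite !mxE.
by rewrite mul0rn !mulr0.
Qed.


Lemma betNN x : bet x x = 0. Proof. exact: bet_alt. Qed.

Lemma three_step_alg a b w m :
  bet a b = 0 -> bet a w != 0 -> bet w b != 0 -> bet (a + b) w != 0 ->
  let l1 := (bet a w)^-1 in let l2 := (bet w b)^-1 in
  let l3 := - (bet (a + b) w)^-1 in
  tv (a + b) m = tv w (- l3) *m tv b (- l2) *m tv w (- l1) *m tv a m
                 *m (tv w l1 *m tv b l2 *m tv w l3).
Proof.
move=> hab haw hwb habw l1 l2 l3.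
set g := tv w l1 *m tv b l2 *m tv w l3.
set h := tv w (- l3) *m tv b (- l2) *m tv w (- l1).
have pg : presT g by rewrite /g; apply: presT_mul; [apply: presT_mul|]; exact: presT_tv.
have hg : h *m g = 1%:M.
  rewrite /h /g -!mulmxA (mulmxA (tv w (- l1))) tv_inv mul1mx.
  by rewrite (mulmxA (tv b (- l2))) tv_inv mul1mx tv_inv.
have ag : a *m g = a + b.
  have e1 : a *m tv w l1 = a + w by rewrite tv_act /l1 mulVf // scale1r.
  have e2 : (a + w) *m tv b l2 = a + w + b.
    by rewrite tv_act betDl hab add0r /l2 mulVf // scale1r.
  have e3 : (a + w + b) *m tv w l3 = a + b.
    rewrite tv_act.
    have -> : bet (a + w + b) w = bet (a + b) w.
      by rewrite !betDl betNN addr0.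
    by rewrite /l3 mulNr mulVf // scaleN1r addrAC addrK.
  by rewrite /g !mulmxA e1 e2 e3.
by rewrite -ag -(tv_conj _ _ pg hg) /h.
Qed.

Lemma direct_alg a b m : bet a b != 0 ->
  tv (a + b) m = tv b (- (bet a b)^-1) *m tv a m *m tv b (bet a b)^-1.
Proof.
move=> hab.
have ag : a *m tv b (bet a b)^-1 = a + b by rewrite tv_act mulVf // scale1r.
by rewrite -ag -(tv_conj _ _ (presT_tv _ _) (tv_inv _ _)).
Qed.

Lemma tv_transv v l : v != 0 -> l != 0 -> tv v l \in transvs J.
Proof.
move=> hv hl; rewrite inE tv_Sp /=; apply/existsP; exists v; apply/existsP.
exists (l *: (J^T *m v^T)); apply/and4P; split => //.
- by rewrite scalemx_eq0 negb_or hl p_neq0.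
- by rewrite sAr vp scaler0.
- by rewrite /tv sAl.
Qed.

Lemma Xcore X s u phi : good_setup J X -> s \in X -> transv_rep s u phi ->
  u != 0 /\ (Tv J u \subset X /\ exists mu, mu != 0 /\ s = tv u mu).
Proof.
move=> [_ [[_ h1 hsub hFq] _]] hs hr.
have [hu hphi _ /eqP es] := and4P hr.
have hs1 : s != 1%:M.
  rewrite es; apply/eqP => /(congr1 (fun M => M - 1%:M)); rewrite (addrC 1%:M) addrK subrr.
  by apply/eqP; apply: colrow_neq0.
have hsT : s \in transvs J by apply: (subsetP hsub); rewrite !inE hs1.
have [mu [hmu emu]] : exists mu, mu != 0 /\ s = tv u mu.
  by apply: (Sp_form _ hr); move: hsT; rewrite inE => /andP[].
split => //; split; last by exists mu.
apply/subsetP => t /TvP[l ->].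
have [->|hl] := eqVneq l 0; first by rewrite tv0.
have := hFq s hs (l / mu) (mulf_neq0 hl (invr_neq0 hmu)).
have e : tv u mu - 1%:M = mu *: Nv u by rewrite /tv addrAC subrr add0r.
by rewrite emu e scalerA mulfVK.
Qed.

Lemma Xelt X s : good_setup J X -> s \in X -> s != 1%:M ->
  exists z mu, [/\ z != 0, mu != 0, s = tv z mu & Tv J z \subset X].
Proof.
move=> hg hs hs1.
have : s \in transvs J.
  by case: hg => [_ [[_ _ hsub _] _]]; apply: (subsetP hsub); rewrite !inE hs1.
rewrite inE => /andP[_ /existsP[u /existsP[phi hr]]].
have [hu [hT [mu [hmu ->]]]] := Xcore hg hs hr.
by exists u, mu.
Qed.

Lemma good_add X v : good_setup J X -> v != 0 -> good_setup J (X :|: Tv J v).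
Proof.
move=> [hA [[[hXsp hgen] h1 hsub hFq] [hsr hsc _ hdiam]]] hv.
have B3 : (X :|: Tv J v) :\ 1%:M \subset transvs J.
  apply/subsetP => x; rewrite in_setD1 in_setU => /andP[hx1 /orP[hx|hT]].
    by apply: (subsetP hsub); rewrite in_setD1 hx1 hx.
  case/TvP: hT => l el; rewrite el in hx1 *.
  have hl : l != 0 by apply: contra hx1 => /eqP ->; rewrite tv0.
  exact: tv_transv.
have sub1 : X :\ 1%:M \subset (X :|: Tv J v) :\ 1%:M by apply: setSD; exact: subsetUl.
split; first exact hA.
split; split.
- split.
    apply/subsetP => x; rewrite in_setU => /orP[hx|/TvP[l ->]].
      exact: (subsetP hXsp).
    exact: tv_Sp.
  move=> g hg; have [k hk] := hgen g hg; exists k; apply: setpow_monoS hk.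
  by apply: symm1_mono; exact: subsetUl.
- by rewrite in_setU h1.
- exact: B3.
- move=> s; rewrite in_setU => /orP[hs|/TvP[l ->]] lam hlam.
    by rewrite in_setU hFq.
  rewrite in_setU; apply/orP; right.
  have -> : 1%:M + lam *: (tv v l - 1%:M) = tv v (lam * l).
    by rewrite /tv addrAC subrr add0r scalerA.
  exact: Tv_tv.
- apply: span_sup hsr _; apply/subsetP => u; rewrite !inE => /existsP[s /andP[hs h]].
  by apply/existsP; exists s; rewrite in_setU hs h.
- apply: span_sup hsc _; apply/subsetP => u; rewrite !inE => /existsP[s /andP[hs h]].
  by apply/existsP; exists s; rewrite in_setU hs h.
- by apply: diam_sc; apply: hdiam.
- move=> X'' h1' h2'; apply: hdiam => //; exact: subset_trans h1'.
Qed.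

Lemma three_step_set S a b w ka kb kw :
  (forall l, tv a l \in setpow S ka) -> (forall l, tv b l \in setpow S kb) ->
  (forall l, tv w l \in setpow S kw) ->
  bet a b = 0 -> bet a w != 0 -> bet w b != 0 -> bet (a + b) w != 0 ->
  forall m, tv (a + b) m \in setpow S (kw + kb + kw + ka + kw + kb + kw).
Proof.
move=> ta tb tw hab haw hwb habw m.
rewrite (three_step_alg m hab haw hwb habw) /= !mulmxA.
by repeat apply: setpow_mul; by [apply: ta|apply: tb|apply: tw].
Qed.

Lemma direct_set S a b ka kb :
  (forall l, tv a l \in setpow S ka) -> (forall l, tv b l \in setpow S kb) ->
  bet a b != 0 -> forall m, tv (a + b) m \in setpow S (kb + ka + kb).
Proof.
move=> ta tb hab m; rewrite (direct_alg m hab).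
by repeat apply: setpow_mul; by [apply: ta|apply: tb].
Qed.

Lemma scal_case y a k : y = k *: a -> y != 0 -> Tv J y = Tv J a.
Proof.
move=> -> hy; apply: Tv_scale; apply: contra hy => /eqP ->; by rewrite scale0r.
Qed.

Lemma Nv_eq_dep a b : b != 0 -> tv a 1 = tv b 1 -> exists k, b = k *: a.
Proof.
move=> hb /addrI; rewrite !scale1r /Nv => e.
exact: (rank1_row (p_neq0 hb) (esym e)).
Qed.

Lemma pair19 X a b : good_setup J X -> a != 0 -> b != 0 -> a + b != 0 ->
  Tv J a :|: Tv J b \subset X -> Tv J (a + b) \subset setpow (symm1 X) 19.
Proof.
move=> hg ha hb hab hT.
have [[hodd _ _ _] [[_ h1 hsub _] [_ _ _ hdiam]]] := hg.
have two0 : (2%:R : F) != 0 by apply: two_nz.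
set S := symm1 X.
have h1S : 1%:M \in S by exact: symm1_1.
have inS : forall x, x \in X -> x \in setpow S 1 by move=> x hx; apply/setpow1/symm1_X.
have TS : forall v, Tv J v \subset X -> forall l, tv v l \in setpow S 1.
  by move=> v hv l; apply: inS; apply: (subsetP hv); exact: Tv_tv.
have hTa : Tv J a \subset X by apply: subset_trans hT; exact: subsetUl.
have hTb : Tv J b \subset X by apply: subset_trans hT; exact: subsetUr.
have ta := TS _ hTa; have tb := TS _ hTb.
have fin : forall k, (k <= 19)%N -> (forall m, tv (a + b) m \in setpow S k) ->
    Tv J (a + b) \subset setpow S 19.
  by move=> k hk hm; apply/subsetP => t /TvP[m ->]; apply: setpow_mono hk _.
have depfin : forall k, a + b = k *: a -> Tv J (a + b) \subset setpow S 19.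
  move=> k e; apply: (fin 1%N) => // m.
  by apply: inS; apply: (subsetP hTa); rewrite -(scal_case e hab); exact: Tv_tv.
have [hab0|hab0] := eqVneq (bet a b) 0; last first.
  by apply: (fin 3%N) => //; exact: (direct_set ta tb hab0).
have Xs : forall v, v != 0 -> Tv J v \subset X -> tv v 1 \in X :\ 1%:M.
  move=> v hv hv'; rewrite in_setD1 tv_neq1 ?oner_neq0 //=.
  by apply: (subsetP hv'); exact: Tv_tv.
have := hdiam (X :\ 1%:M) (subxx _) hsub _ _ (Xs _ ha hTa) (Xs _ hb hTb).
case/or3P => [/eqP e|/gedge_tv|/existsP[w0 /andP[hw0 /andP[e1 e2]]]].
- have [k ek] := Nv_eq_dep hb e.
  by apply: (depfin (1 + k)); rewrite ek scalerDl scale1r.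
- by rewrite hab0 eqxx.
move: hw0; rewrite in_setD1 => /andP[hw01 hw0].
have [z [mu [hz hmu ez hTz]]] := Xelt hg hw0 hw01.
rewrite ez in e1 e2; have haz := gedge_tv e1; have hzb := gedge_tv e2.
have tz := TS _ hTz.
have [hz0|hz0] := eqVneq (bet (a + b) z) 0; last first.
  by apply: (fin 7%N) => //; exact: (three_step_set ta tb tz hab0 haz hzb hz0).
pose X'' := X :\ 1%:M :|: (Tv J (a + b) :\ 1%:M).
have s1 : X :\ 1%:M \subset X'' by exact: subsetUl.
have s2 : X'' \subset transvs J.
  apply/subsetP => x; rewrite in_setU => /orP[hx|].
    exact: (subsetP hsub).
  rewrite in_setD1 => /andP[hx1 /TvP[l el]]; rewrite el in hx1 *.
  have hl : l != 0 by apply: contra hx1 => /eqP ->; rewrite tv0.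
  exact: tv_transv.
have hsa : tv a 1 \in X'' by apply: (subsetP s1); exact: Xs.
have hst : tv (a + b) 1 \in X''.
  rewrite in_setU; apply/orP; right; rewrite in_setD1 tv_neq1 ?oner_neq0 //=.
  exact: Tv_tv.
have ba0 : bet a (a + b) = 0 by rewrite betDr betNN hab0 addr0.
have := hdiam X'' s1 s2 _ _ hsa hst.
case/or3P => [/eqP e|/gedge_tv|/existsP[w1 /andP[hw1 /andP[f1 f2]]]].
- have [k ek] := Nv_eq_dep hab e.
  exact: (depfin k).
- by rewrite ba0 eqxx.
move: hw1; rewrite in_setU => /orP[hw1|]; last first.
  rewrite in_setD1 => /andP[_ /TvP[l el]]; rewrite el in f1.
  by move: (gedge_tv f1); rewrite ba0 eqxx.
move: hw1; rewrite in_setD1 => /andP[hw11 hw1].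
have [z' [mu' [hz' hmu' ez' hTz']]] := Xelt hg hw1 hw11.
rewrite ez' in f1 f2; have haz' := gedge_tv f1; have hz'ab := gedge_tv f2.
have tz' := TS _ hTz'.
have habz' : bet (a + b) z' != 0 by rewrite bet_anti oppr_eq0.
have [hz'b|hz'b] := eqVneq (bet z' b) 0; last first.
  by apply: (fin 7%N) => //; exact: (three_step_set ta tb tz' hab0 haz' hz'b habz').
have tnb : forall l, tv (- b) l \in setpow S 1.
  by apply: TS; rewrite -scaleN1r Tv_scale // oppr_eq0 oner_neq0.
have tamb : forall l, tv (a + - b) l \in setpow S 7.
  have c1 : bet a (- b) = 0 by rewrite betNr hab0 oppr0.
  have c2 : bet z (- b) != 0 by rewrite betNr oppr_eq0.
  have c3 : bet (a + - b) z != 0.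
    have e : bet b z = - bet a z by apply/eqP; rewrite -addr_eq0 addrC -betDl hz0.
    by rewrite betDl betNl e opprK -mulr2n -mulr_natl mulf_neq0.
  exact: (three_step_set ta tnb tz c1 haz c2 c3).
have tbma : forall l, tv (b - a) l \in setpow S 7.
  move=> l; have e : b - a = (-1) *: (a + - b) by rewrite scaleN1r opprD opprK addrC.
  rewrite e tv_scale; exact: tamb.
have taa : forall l, tv (a + a) l \in setpow S 1.
  move=> l; have e : a + a = 2%:R *: a by rewrite scaler_nat mulr2n.
  by rewrite e tv_scale; apply: ta.
have e : a + b = (a + a) + (b - a) by rewrite addrA addrAC addrK.
have d1 : bet (a + a) (b - a) = 0.
  by rewrite !betDl !betDr !betNr hab0 betNN oppr0 !addr0.
have d2 : bet (a + a) z' != 0 by rewrite betDl -mulr2n -mulr_natl mulf_neq0.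
have d3 : bet z' (b - a) != 0.
  by rewrite betDr hz'b add0r betNr bet_anti opprK.
have d4 : bet (a + a + (b - a)) z' != 0 by rewrite -e.
apply: (fin (1 + 7 + 1 + 1 + 1 + 7 + 1)%N) => // m; rewrite e.
exact: (three_step_set taa tbma tz' d1 d2 d3 d4).
Qed.

Lemma invmx_tv v l : invmx (tv v l) = tv v (- l).
Proof.
have [hu _] := mulmx1_unit (tv_inv' v l).
by rewrite -[invmx _]mulmx1 -(tv_inv' v l) mulmxA mulVmx ?mul1mx.
Qed.

Lemma symm1_ext X v1 v2 r : (0 < r)%N ->
  Tv J v1 :|: Tv J v2 \subset setpow (symm1 X) r ->
  forall y, y \in symm1 (X :|: (Tv J v1 :|: Tv J v2)) -> y \in setpow (symm1 X) r.
Proof.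
move=> hr hT y.
have h1 : 1%:M \in symm1 X := symm1_1 X.
have hTinv : forall x, x \in Tv J v1 :|: Tv J v2 -> invmx x \in Tv J v1 :|: Tv J v2.
  move=> x; rewrite !in_setU => /orP[/TvP[l ->]|/TvP[l ->]]; rewrite invmx_tv Tv_tv ?orbT //.
rewrite /symm1 2!in_setU => /orP[/orP[|/imsetP[x hx ->]]|].
- rewrite in_setU => /orP[hx|hx].
    by apply: (setpow_mono h1 hr); apply/setpow1/symm1_X.
  exact: (subsetP hT).
- move: hx; rewrite in_setU => /orP[hx|hx].
    by apply: (setpow_mono h1 hr); apply/setpow1/symm1_inv.
  by apply: (subsetP hT); apply: hTinv.
- rewrite inE => /eqP ->; apply: (setpow_mono h1 (leq0n r)); exact: setpow0.
Qed.

Section Rec.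
Variable K : nat.
Hypothesis hK : (0 < K)%N.
Hypothesis HP : forall X, good_setup J X -> forall a b, a != 0 -> b != 0 -> a + b != 0 ->
  Tv J a :|: Tv J b \subset X -> Tv J (a + b) \subset setpow (symm1 X) K.

Lemma rec j : forall X (s : seq 'rV[F]_n), good_setup J X -> free s -> s != [::] ->
  (size s <= 2 ^ j)%N -> (forall w, w \in s -> Tv J w \subset X) ->
  Tv J (\sum_(w <- s) w) \subset setpow (symm1 X) (K ^ j).
Proof.
elim: j => [|j IH] X s hg fs sn hsz hw.
  case: s fs sn hsz hw => [//|w [|//]] _ _ _ hw.
  rewrite big_seq1 expn0; apply/subsetP => t ht; apply/setpow1/symm1_X.
  by apply: (subsetP (hw w (mem_head _ _))).
have h1 : 1%:M \in symm1 X := symm1_1 X.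
have [hle|hgt] := leqP (size s) (2 ^ j).
  apply/subsetP => t ht; apply: (setpow_mono h1 (leq_pexp2l hK (leqnSn j))).
  exact: (subsetP (IH X s hg fs sn hle hw)).
set s1 := take (2 ^ j) s; set s2 := drop (2 ^ j) s.
have es : s = s1 ++ s2 by rewrite cat_take_drop.
have f1 : free s1 by apply: (@catl_free _ _ s2); rewrite -es.
have f2 : free s2 by apply: (@catr_free _ _ s1); rewrite -es.
have sz1 : size s1 = (2 ^ j)%N by rewrite size_take hgt.
have n1 : s1 != [::] by rewrite -size_eq0 sz1 expn_eq0.
have n2 : s2 != [::] by rewrite -size_eq0 size_drop subn_eq0 -ltnNge.
have sz2 : (size s2 <= 2 ^ j)%N by rewrite size_drop leq_subLR addnn -mul2n -expnS.
have w1 : forall w, w \in s1 -> Tv J w \subset X by move=> w hws; apply: hw; apply: mem_take hws.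
have w2 : forall w, w \in s2 -> Tv J w \subset X by move=> w hws; apply: hw; apply: mem_drop hws.
have T1 := IH X s1 hg f1 n1 (eq_leq sz1) w1.
have T2 := IH X s2 hg f2 n2 sz2 w2.
set v1 := \sum_(w <- s1) w in T1; set v2 := \sum_(w <- s2) w in T2.
have hv1 : v1 != 0 by apply: sum_free_neq0.
have hv2 : v2 != 0 by apply: sum_free_neq0.
have ev : \sum_(w <- s) w = v1 + v2 by rewrite {1}es big_cat.
have hv : v1 + v2 != 0 by rewrite -ev; apply: sum_free_neq0.
set X' := X :|: (Tv J v1 :|: Tv J v2).
have gX' : good_setup J X'.
  by rewrite /X' setUA; apply: good_add => //; apply: good_add.
have sub : Tv J v1 :|: Tv J v2 \subset X' by exact: subsetUr.
have HX := HP gX' hv1 hv2 hv sub.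
have hT : Tv J v1 :|: Tv J v2 \subset setpow (symm1 X) (K ^ j) by rewrite subUset T1 T2.
have pos : (0 < K ^ j)%N by rewrite expn_gt0 hK.
rewrite ev; apply/subsetP => t ht.
rewrite expnS; apply: (setpow_sub (symm1_ext pos hT)).
exact: (subsetP HX).
Qed.

Lemma transvs_bound X j : good_setup J X -> (n <= 2 ^ j)%N ->
  transvs J \subset setpow (symm1 X) (K ^ j).
Proof.
move=> hg hn; apply/subsetP => t; rewrite inE => /andP[hsp /existsP[u /existsP[phi hr]]].
have [mu [hmu ->]] := Sp_form hsp hr.
have [hu _ _ _] := and4P hr.
have [_ [_ [hspan _ _ _]]] := hg.
have huL : (u \in <<enum (VX X)>>)%VS.
  have [c ->] := hspan u; apply: memv_suml => x hx; apply: memvZ; apply: memv_span.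
  by rewrite mem_enum.
have [Y [fY sY hLY]] := ex_free_sub (enum (VX X)).
have huY : (u \in <<Y>>)%VS by apply: (subvP hLY).
have [k ek _] := free_span fY huY.
set s := [seq k x *: x | x <- Y & k x != 0].
have es : \sum_(w <- s) w = u.
  rewrite ek big_map big_filter big_mkcond /=; apply: eq_bigr => x _.
  by case: ifP => // /negbFE/eqP ->; rewrite scale0r.
have fs : free s by apply: free_scale_filter.
have sn : s != [::] by apply: contra hu => /eqP hs; rewrite -es hs big_nil.
have hsz : (size s <= n)%N.
  have := dimvS (subvf <<s>>%VS); rewrite (eqnP fs) dimvf /dimv /=.
  by rewrite dim_matrix mul1r.
have hw : forall w, w \in s -> Tv J w \subset X.
  move=> w /mapP[x]; rewrite mem_filter => /andP[hkx hxY] ->.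
  rewrite Tv_scale //.
  have := sY x hxY; rewrite mem_enum inE => /existsP[s0 /andP[hs0 /existsP[phi0 hr0]]].
  by have [_ [hT _]] := Xcore hg hs0 hr0.
have := rec hg fs sn (leq_trans hsz hn) hw; rewrite es => hT.
by apply: (subsetP hT); exact: Tv_tv.
Qed.

End Rec.

End Alg.

Lemma expn_pow K j : expn K j = Nat.pow K j.
Proof. by elim: j => //= j IH; rewrite expnS IH. Qed.

Lemma setup_facts (F : finFieldType) n (J : 'M[F]_n) X : good_setup J X ->
  [/\ J^T = - J, (forall x, formv J x x = 0) & J \in unitmx].
Proof.
move=> [[_ _ _ [halt hJu]] _]; split => //; exact: alt_anti.
Qed.

Lemma gen_bound (F : finFieldType) (n : nat) (J : 'M[F]_n) (X : {set 'M[F]_n}) (c : R) :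
  good_setup J X -> Rle (INR 1) c ->
  (forall (F' : finFieldType) (n' : nat) (J' : 'M[F']_n')
          (X' : {set 'M[F']_n'}) (a b : 'rV[F']_n'),
     good_setup J' X' -> a != 0 -> b != 0 -> a + b != 0 ->
     Tv J' a :|: Tv J' b \subset X' ->
     ell_le X' (Tv J' (a + b)) c) ->
  ell_le X (transvs J) (Rmult c (Rpower (INR n) (Rdiv (ln c) (ln (INR 2))))).
Proof.
move=> hg hc Hc.
have [hanti halt hJu] := setup_facts hg.
have [[_ _ h4 _] _] := hg.
have [K [hK1 [hKc hKmax]]] := K_of_c c hc.
have hK : (0 < K)%N by apply/leP.
have HP : forall X', good_setup J X' -> forall a b, a != 0 -> b != 0 -> a + b != 0 ->
    Tv J a :|: Tv J b \subset X' -> Tv J (a + b) \subset setpow (symm1 X') K.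
  move=> X' hg' a b ha hb hab hT; have [k [hk hsub]] := Hc F n J X' a b hg' ha hb hab hT.
  apply/subsetP => t ht; apply: (setpow_mono (symm1_1 _) _ (subsetP hsub t ht)).
  by apply/leP; apply: hKmax.
set j := up_log 2 n.
have hnj : (n <= 2 ^ j)%N by apply: up_logP.
have hn1 : (1 < n)%N by apply: leq_trans h4.
have hj : (2 ^ j.-1 < n)%N by apply: up_log_gtn.
have j1 : (0 < j)%N by rewrite up_log_gt0 hn1.
exists (K ^ j)%N; split; last exact: (transvs_bound hanti halt hJu hK HP hg hnj).
rewrite expn_pow; apply: real_bound => //.
- by apply/leP.
- apply/leP; rewrite -expn_pow; have -> : (j - 1)%coq_nat = j.-1 by rewrite -subn1. exact: ltnW.
Qed.

Lemma ell_mono (F : finFieldType) (n : nat) (X Y : {set 'M[F]_n}) (r1 r2 : R) :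
  ell_le X Y r1 -> Rle r1 r2 -> ell_le X Y r2.
Proof. by move=> [k [hk hs]] h; exists k; split => //; apply: Rle_trans h. Qed.

Unset Implicit Arguments.

Theorem theorem4p17 (F : finFieldType) (n : nat) (J : 'M[F]_n)
    (X : {set 'M[F]_n}) :
  good_setup J X ->
  (forall c : R, Rle (INR 1) c ->
     (forall (F' : finFieldType) (n' : nat) (J' : 'M[F']_n')
             (X' : {set 'M[F']_n'}) (a b : 'rV[F']_n'),
        good_setup J' X' -> a != 0 -> b != 0 -> a + b != 0 ->
        Tv J' a :|: Tv J' b \subset X' ->
        ell_le X' (Tv J' (a + b)) c) ->
     ell_le X (transvs J)
       (Rmult c (Rpower (INR n) (Rdiv (ln c) (ln (INR 2))))))
  /\ ell_le X (transvs J)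
       (Rmult (INR 21) (Rpower (INR n) (Rdiv (INR 44) (INR 10)))).
Proof.
move=> hg; split.
  by move=> c hc Hc; apply: gen_bound.
have [[_ _ h4 _] _] := hg.
have H19 : forall (F' : finFieldType) (n' : nat) (J' : 'M[F']_n')
             (X' : {set 'M[F']_n'}) (a b : 'rV[F']_n'),
        good_setup J' X' -> a != 0 -> b != 0 -> a + b != 0 ->
        Tv J' a :|: Tv J' b \subset X' ->
        ell_le X' (Tv J' (a + b)) (INR 19).
  move=> F' n' J' X' a b hg' ha hb hab hT.
  have [hanti halt hJu] := setup_facts hg'.
  by exists 19%N; split; [apply: Rle_refl | exact: pair19].
have h1 : Rle (INR 1) (INR 19) by apply: le_INR; apply/leP.
apply: ell_mono (gen_bound hg h1 H19) _.
apply: num_bound; apply/leP; exact: leq_trans h4.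
Qed.
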